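(* For integers $1\le k<d$, the truncated binomial $P_{k;d}(x)=\sum_{j=0}^{k}\binom{d}{j}x^j$ has no multiple roots. *)

(* Defs.v *)
From mathcomp Require Import all_boot all_algebra all_field.
Set Implicit Arguments. Unset Strict Implicit. Unset Printing Implicit Defensive.
Import GRing.Theory Num.Theory.
Local Open Scope ring_scope.

Definition truncBinom (k d : nat) : {poly algC} :=
  \poly_(j < k.+1) ('C(d, j))%:R.

Definition multiple_root (p : {poly algC}) (z : algC) : Prop :=
  p != 0 /\ (('X - z%:P) ^+ 2 %| p).

(* Main.v *)
Require Import Defs.
From mathcomp Require Import all_boot all_algebra all_field.
Local Open Scope ring_scope.
Import GRing.Theory Num.Theory.
Lemma truncBinom_id (k d : nat) : (k < d)%N ->
  ('X + 1) * (truncBinom k d)^`() =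
  (d%:R : algC) *: truncBinom k d - (((d - k) * 'C(d, k))%:R : algC) *: 'X^k.
Proof.
move=> kd; apply/polyP => i.
rewrite mulrDl mul1r coefD coefXM !coef_deriv coefB !coefZ coefXn !coef_poly.
case: i => [|i] /=.
  rewrite add0r bin0 mulr1 mulr1n ltnS.
  case: k kd => [|k] kd /=.
    by rewrite bin0 muln1 subn0 mulr1 subrr.
  by rewrite mulr0 subr0 bin1.
have hb : forall m : nat, (m.+1 * 'C(d, m.+1) = (d - m) * 'C(d, m))%N.
  by move=> m; rewrite -mul_bin_diag mul_bin_down.
rewrite !ltnS.
case: (ltngtP i.+1 k) => h.
- rewrite mulr0 subr0 -!mulrnA -natrM -natrD.
  congr (_%:R); rewrite [('C(d, i.+2) * _)%N]mulnC hb [((d - _) * _)%N]mulnC -mulnDr mulnC subnKC //.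
  by apply: leq_trans (ltnW kd); apply: ltnW.
- by rewrite !mul0rn addr0 !mulr0 subr0.
- rewrite mulr1 mul0rn addr0 -mulrnA -!natrM -natrB; last first.
    by rewrite h leq_mul2r leq_subr orbT.
  apply/eqP; rewrite eqr_nat; subst k; rewrite -mulnBl subKn; first by rewrite mulnC.
  exact: ltnW.
Qed.

Theorem mainTheorem3 (k d : nat) : (1 <= k)%N -> (k < d)%N ->
  forall z : algC, ~ multiple_root (truncBinom k d) z.
Proof.
move=> k1 kd z [p0 /dvdpP [q hq]].
have r0 : (truncBinom k d).[z] = 0.
  rewrite hq hornerM horner_exp hornerXsubC subrr expr0n mulr0 //.
have r1 : (truncBinom k d)^`().[z] = 0.
  rewrite hq derivM expr2 derivM derivXsubC mul1r mulr1 !hornerD !hornerM hornerXsubC subrr.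
  by rewrite hornerD hornerXsubC subrr !mul0r !addr0 !mulr0 addr0.
have := congr1 (horner^~ z) (truncBinom_id k d kd).
rewrite /= hornerM r1 mulr0 hornerD hornerN !hornerZ r0 mulr0 add0r hornerXn.
move/esym/eqP; rewrite oppr_eq0 mulf_eq0 pnatr_eq0 muln_eq0 subn_eq0.
rewrite leqNgt kd /= eqn0Ngt bin_gt0 (ltnW kd) /= expf_eq0 => /andP [_ /eqP z0].
move: r0; rewrite z0 horner_coef0 coef_poly /= bin0 => /eqP.
by rewrite oner_eq0.
Qed.
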